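(* Let $q$ be an odd prime, $n \geq 1$ an integer, and $v = q^n$. Let $k$ be an odd positive integer. Then there are no integers $a_1, \ldots, a_k$ with $1 \leq a_j < v$ for all $j$ such that $\prod_{j=1}^k a_j = \prod_{j=1}^k (v - a_j)$. *)

(* Defs.v *)
From mathcomp Require Import all_boot.
Set Implicit Arguments. Unset Strict Implicit. Unset Printing Implicit Defensive.

(* Main.v *)
Require Import Defs.
From mathcomp Require Import all_boot.
From mathcomp Require Import all_algebra.
Import GRing.Theory.
Local Open Scope nat_scope.

Lemma Fp_natr_eq0 (q x : nat) : prime q -> ((x%:R : 'F_q) == 0)%R = (q %| x).
Proof.
move=> pq; rewrite -(inj_eq val_inj) /= val_Fp_nat //.
Qed.

Theorem lemma4p10 (q n k : nat) (a : 'I_k -> nat) :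
  prime q -> odd q -> 1 <= n -> odd k ->
  (forall j, 1 <= a j < q ^ n) ->
  \prod_(j < k) a j <> \prod_(j < k) (q ^ n - a j).
Proof.
move=> pq oq n1 ok ha.
have q0 : 0 < q by exact: prime_gt0.
pose e j := logn q (a j).
pose u j := a j %/ q ^ e j.
have hu : forall j, a j = u j * q ^ e j /\ coprime q (u j) /\ e j < n.
  move=> j; have /andP[a1 aN] := ha j.
  have [m cm Hm] := pfactor_coprime pq a1.
  rewrite /u /e; move: Hm; set L := logn _ _ => Hm.
  have Hu : a j %/ q ^ L = m by rewrite {1}Hm mulnK ?expn_gt0 ?q0.
  rewrite Hu; split; first exact Hm.
  split; first exact cm.
  rewrite -(ltn_exp2l _ _ (prime_gt1 pq)).
  apply: leq_ltn_trans aN; rewrite Hm leq_pmull //.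
  by move: a1; rewrite Hm muln_gt0 => /andP[].
pose w j := q ^ (n - e j) - u j.
have hw : forall j, q ^ n - a j = w j * q ^ e j.
  move=> j; have [-> [_ lt]] := hu j.
  by rewrite /w mulnBl -expnD subnK // ltnW.
move=> H.
have H2 : \prod_(j < k) u j = \prod_(j < k) w j.
  move: H; rewrite (eq_bigr _ (fun j _ => (hu j).1)) (eq_bigr _ (fun j _ => hw j)).
  rewrite !big_split /= => /eqP; rewrite eqn_pmul2r; first by move/eqP.
  by rewrite prodn_gt0 // => j; rewrite expn_gt0 q0.
have wu : forall j, ((w j)%:R : 'F_q)%R = (- (u j)%:R)%R.
  move=> j; apply/eqP; rewrite -addr_eq0 -natrD Fp_natr_eq0 //.
  have [_ [cu lt]] := hu j.
  rewrite /w subnK; first by rewrite dvdn_exp // subn_gt0.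
  apply: ltnW; rewrite -(@ltn_pmul2r (q ^ e j)) ?expn_gt0 ?q0 // -expnD subnK; last exact: ltnW.
  by rewrite -(hu j).1; have /andP[] := ha j.
have := congr1 (fun x => (x%:R : 'F_q)%R) H2.
rewrite /= !natr_prod (eq_bigr _ (fun j _ => wu j)) prodrN card_ord.
rewrite -signr_odd ok expr1 mulN1r.
move/eqP; rewrite -addr_eq0 -mulr2n -mulr_natl mulf_eq0 => /orP[|].
  rewrite Fp_natr_eq0 // => /dvdn_leq le2; have {}le2 := le2 isT.
  have q1 := prime_gt1 pq.
  have q2 : q = 2 by apply/eqP; rewrite eqn_leq le2.
  by rewrite q2 in oq.
rewrite prodf_seq_eq0 => /hasP[j _ /andP[_]].
rewrite Fp_natr_eq0 //; have [_ [cu _]] := hu j.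
by rewrite prime_coprime // in cu; rewrite (negPf cu).
Qed.
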